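(* For every torus of tensor product $y=\gamma\otimes\hat\gamma$ one has $W(y)>2\pi^2$.
   Context: Let $\gamma:\mathbb{R}\to S^n\subset\mathbb{R}^{n+1}$ and $\hat\gamma:\mathbb{R}\to S^m\subset\mathbb{R}^{m+1}$ be smooth closed curves parametrized by arc length with periods equal to their lengths. For $x\in\mathbb{R}^{n+1}$, $\hat x\in\mathbb{R}^{m+1}$ the tensor product is $x\otimes\hat x=(x_i\hat x_j)_{i,j}\in\mathbb{R}^{(n+1)(m+1)}$ (lexicographic order). The torus of tensor product is $y=\gamma\otimes\hat\gamma:(s,\hat s)\mapsto\gamma(s)\otimes\hat\gamma(\hat s)\in S^{(n+1)(m+1)-1}$. For a closed immersed surface $x:M\to S^N$ with mean curvature vector $\vec H$ and Gauss curvature $K$, the Willmore functional is $W(x)=\int_M(|\vec H|^2-K+1)\,dM$. *)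

(* Defs.v *)
From Stdlib Require Import Reals Lra Lia.
Open Scope R_scope.

(* Vectors in R^d are functions nat -> R; only coordinates 0..d-1 matter. *)
Fixpoint rsum (d : nat) (f : nat -> R) : R :=
  match d with O => 0 | S k => rsum k f + f k end.

Definition dot (d : nat) (u v : nat -> R) : R := rsum d (fun k => u k * v k).
Definition vadd (u v : nat -> R) : nat -> R := fun k => u k + v k.
Definition vscal (c : R) (u : nat -> R) : nat -> R := fun k => c * u k.
Definition vsub (u v : nat -> R) : nat -> R := fun k => u k - v k.

Definition smooth (f : R -> R) : Prop :=
  exists D : nat -> R -> R,
    (forall x, D O x = f x) /\
    (forall k x, derivable_pt_lim (D k) x (D (S k) x)).

Definition closed_arclength_curve (n : nat) (L : R) (g : nat -> R -> R) : Prop :=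
  0 < L /\
  (forall i, (i <= n)%nat -> smooth (g i)) /\
  (forall s, rsum (S n) (fun i => g i s ^ 2) = 1) /\
  (forall s, exists v : nat -> R,
      (forall i, (i <= n)%nat -> derivable_pt_lim (g i) s (v i)) /\
      rsum (S n) (fun i => v i ^ 2) = 1) /\
  (forall s i, (i <= n)%nat -> g i (s + L) = g i s) /\
  (forall p, 0 < p -> (forall s i, (i <= n)%nat -> g i (s + p) = g i s) -> L <= p).

(* tensor product x (x) xh in R^((n+1)(m+1)), lexicographic order:
   component index i*(m+1)+j holds x_i * xh_j *)
Definition tensor (m : nat) (x xh : nat -> R) : nat -> R :=
  fun k => x (Nat.div k (S m)) * xh (Nat.modulo k (S m)).

Definition torus_tensor (m : nat) (g gh : nat -> R -> R) : R -> R -> nat -> R :=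
  fun s t => tensor m (fun i => g i s) (fun j => gh j t).

Definition surface_partials (d : nat) (X Xs Xt Xss Xst Xtt : R -> R -> nat -> R) : Prop :=
  forall s t k, (k < d)%nat ->
    derivable_pt_lim (fun u => X u t k) s (Xs s t k) /\
    derivable_pt_lim (fun u => X s u k) t (Xt s t k) /\
    derivable_pt_lim (fun u => Xs u t k) s (Xss s t k) /\
    derivable_pt_lim (fun u => Xs s u k) t (Xst s t k) /\
    derivable_pt_lim (fun u => Xt s u k) t (Xtt s t k).

Section Geometry.
(* pointwise data: position p in S^(d-1), tangent vectors a = X_s, b = X_t,
   second derivatives A = X_ss, B = X_st, C = X_tt *)
Variables (d : nat) (p a b A B C : nat -> R).

Definition gE := dot d a a.
Definition gF := dot d a b.
Definition gG := dot d b b.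
Definition gdet := gE * gG - gF * gF.

(* orthogonal projection onto the tangent plane span(a,b) *)
Definition tproj (v : nat -> R) : nat -> R :=
  vadd (vscal ((gG * dot d v a - gF * dot d v b) / gdet) a)
       (vscal ((gE * dot d v b - gF * dot d v a) / gdet) b).

Definition enormal (v : nat -> R) : nat -> R := vsub v (tproj v).
(* normal part in the sphere S^(d-1): also remove the position direction p *)
Definition snormal (v : nat -> R) : nat -> R :=
  vsub (enormal v) (vscal (dot d v p) p).

(* mean curvature vector of the surface in S^(d-1):
   H = (1/2) g^{ij} (X_ij)^perp *)
Definition mean_curv : nat -> R :=
  vscal (/ (2 * gdet))
    (vadd (vsub (vscal gG (snormal A)) (vscal (2 * gF) (snormal B)))
          (vscal gE (snormal C))).

(* Gauss curvature (via the Gauss equation for the surface in R^d) *)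
Definition gauss_curv : R :=
  (dot d (enormal A) (enormal C) - dot d (enormal B) (enormal B)) / gdet.

Definition willmore_density : R :=
  (dot d mean_curv mean_curv - gauss_curv + 1) * sqrt gdet.
End Geometry.

Definition willmore_integrand (d : nat) (X Xs Xt Xss Xst Xtt : R -> R -> nat -> R)
  (s t : R) : R :=
  willmore_density d (X s t) (Xs s t) (Xt s t) (Xss s t) (Xst s t) (Xtt s t).

(* Main.v *)
Require Import Defs.
From Stdlib Require Import Reals Lra Lia Psatz.
From Coquelicot Require Import Coquelicot.
Open Scope R_scope.

Implicit Types f g G h : R -> R.
Definition Cont (f : R -> R) := forall x, continuous f x.

Lemma cont_plus f g : Cont f -> Cont g -> Cont (fun x => f x + g x).
Proof. intros Hf Hg x. apply (continuous_plus f g x); auto. Qed.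
Lemma cont_mult f g : Cont f -> Cont g -> Cont (fun x => f x * g x).
Proof. intros Hf Hg x. apply (continuous_mult f g x); auto. Qed.
Lemma cont_const c : Cont (fun _ => c).
Proof. intros x. apply continuous_const. Qed.
Lemma cont_id : Cont (fun x => x).
Proof. intros x. apply continuous_id. Qed.
Lemma cont_opp f : Cont f -> Cont (fun x => - f x).
Proof. intros Hf x. apply (continuous_opp f x); auto. Qed.
Lemma cont_minus f g : Cont f -> Cont g -> Cont (fun x => f x - g x).
Proof. intros Hf Hg x. apply (continuous_minus f g x); auto. Qed.
Lemma cont_scal k f : Cont f -> Cont (fun x => k * f x).
Proof. intros Hf. apply cont_mult; auto using cont_const. Qed.
Lemma cont_sq f : Cont f -> Cont (fun x => f x ^ 2).
Proof. intros Hf. eapply (cont_mult f (fun x => f x * 1)) in Hf.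
 - intros x. eapply continuous_ext; [|apply Hf]. intros; simpl; ring.
 - apply cont_mult; auto using cont_const. Qed.
Lemma cont_shift f c : Cont f -> Cont (fun x => f (x + c)).
Proof. intros Hf x. apply (continuous_comp (fun x => x + c) f x); auto.
  apply (continuous_plus (fun x => x) (fun _ => c)); auto using continuous_id, continuous_const. Qed.
Lemma cont_ext f g : (forall x, f x = g x) -> Cont f -> Cont g.
Proof. intros E Hf x. eapply continuous_ext; eauto. Qed.

Lemma exRI f a b : Cont f -> ex_RInt f a b.
Proof. intros Hf. apply (@ex_RInt_continuous R_CompleteNormedModule). intros; apply Hf. Qed.

Lemma RI_plus f g a b : Cont f -> Cont g -> RInt (fun x => f x + g x) a b = RInt f a b + RInt g a b.
Proof. intros. apply (@RInt_plus R_CompleteNormedModule f g a b); apply exRI; auto. Qed.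
Lemma RI_minus f g a b : Cont f -> Cont g -> RInt (fun x => f x - g x) a b = RInt f a b - RInt g a b.
Proof. intros. apply (@RInt_minus R_CompleteNormedModule f g a b); apply exRI; auto. Qed.
Lemma RI_scal f k a b : Cont f -> RInt (fun x => k * f x) a b = k * RInt f a b.
Proof. intros. apply (@RInt_scal R_CompleteNormedModule f a b k); apply exRI; auto. Qed.
Lemma RI_const c a b : RInt (fun _ => c) a b = (b - a) * c.
Proof. rewrite RInt_const. reflexivity. Qed.
Lemma RI_chasles f a b c : Cont f -> RInt f a b + RInt f b c = RInt f a c.
Proof. intros. apply (@RInt_Chasles R_CompleteNormedModule f a b c); apply exRI; auto. Qed.
Lemma RI_ext f g a b : (forall x, f x = g x) -> RInt f a b = RInt g a b.
Proof. intros. apply RInt_ext; auto. Qed.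

Lemma RI_shift G c a b : Cont G -> RInt (fun x => G (x + c)) a b = RInt G (a + c) (b + c).
Proof. intros HG.
  transitivity (RInt (fun y : R => @scal R_AbsRing R_NormedModule 1 (G (1 * y + c))) a b).
  - apply RI_ext. intros x. change (G (x + c) = 1 * G (1 * x + c)). rewrite Rmult_1_l. f_equal. ring.
  - rewrite (@RInt_comp_lin R_CompleteNormedModule). f_equal; ring. apply exRI; auto. Qed.

Lemma RI_periodic G T a : Cont G -> (forall x, G (x + T) = G x) ->
  RInt G a (a + T) = RInt G 0 T.
Proof. intros HG HP.
  rewrite <- (RI_chasles G a T (a+T)) by auto.
  replace (RInt G T (a+T)) with (RInt G 0 a).
  - rewrite Rplus_comm, RI_chasles; auto.
  - replace T with (0+T) at 1 by ring. rewrite <- RI_shift; auto.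
    apply RI_ext. intros; symmetry; auto. Qed.

Lemma RI_ge0 f a b : a <= b -> Cont f -> (forall x, 0 <= f x) -> 0 <= RInt f a b.
Proof. intros. apply RInt_ge_0; auto. apply exRI; auto. Qed.
Lemma RI_le f g a b : a <= b -> Cont f -> Cont g -> (forall x, f x <= g x) -> RInt f a b <= RInt g a b.
Proof. intros. apply RInt_le; auto; apply exRI; auto. Qed.

Lemma der_cont f f' : (forall x, is_derive f x (f' x)) -> Cont f.
Proof. intros H x. apply (@ex_derive_continuous R_AbsRing R_NormedModule). eexists; eauto. Qed.
Implicit Types x c l : R.

Lemma c_plus f g x : continuous f x -> continuous g x -> continuous (fun x => f x + g x) x.
Proof. intros. apply (continuous_plus f g x); auto. Qed.
Lemma c_minus f g x : continuous f x -> continuous g x -> continuous (fun x => f x - g x) x.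
Proof. intros. apply (continuous_minus f g x); auto. Qed.
Lemma c_mult f g x : continuous f x -> continuous g x -> continuous (fun x => f x * g x) x.
Proof. intros. apply (continuous_mult f g x); auto. Qed.
Lemma c_const c x : continuous (fun _ : R => c) x.
Proof. apply continuous_const. Qed.
Lemma c_ext f g x : (forall y, f y = g y) -> continuous f x -> continuous g x.
Proof. intros E H. eapply continuous_ext; eauto. Qed.
Lemma c_der f x l : is_derive f x l -> continuous f x.
Proof. intros H. apply (@ex_derive_continuous R_AbsRing R_NormedModule). eexists; eauto. Qed.

Lemma exRI_I f a b : a <= b -> (forall x, a <= x <= b -> continuous f x) -> ex_RInt f a b.
Proof. intros Hab H. apply (@ex_RInt_continuous R_CompleteNormedModule).
  intros z Hz. apply H. rewrite Rmin_left, Rmax_right in Hz; lra. Qed.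

Lemma der_val f x l l' : is_derive f x l -> l = l' -> is_derive f x l'.
Proof. intros H E; subst; auto. Qed.
Lemma der_mult f g x a b : is_derive f x a -> is_derive g x b ->
  is_derive (fun y => f y * g y) x (a * g x + f x * b).
Proof. intros Ha Hb. apply (is_derive_mult f g x a b Ha Hb). intros; apply Rmult_comm. Qed.
Lemma der_plus f g x a b : is_derive f x a -> is_derive g x b ->
  is_derive (fun y => f y + g y) x (a + b).
Proof. intros Ha Hb. apply (is_derive_plus f g x a b Ha Hb). Qed.
Lemma der_minus f g x a b : is_derive f x a -> is_derive g x b ->
  is_derive (fun y => f y - g y) x (a - b).
Proof. intros Ha Hb. apply (is_derive_minus f g x a b Ha Hb). Qed.
Lemma der_const c x : is_derive (fun _ => c) x 0.
Proof. apply (is_derive_const c x). Qed.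
Lemma der_scal f x k a : is_derive f x a -> is_derive (fun y => k * f y) x (k * a).
Proof. apply is_derive_scal. Qed.
Lemma der_sq f x a : is_derive f x a -> is_derive (fun y => f y ^ 2) x (2 * f x * a).
Proof. intros Ha. eapply der_val. apply (is_derive_pow f 2 x a Ha). simpl; ring. Qed.
Lemma der_shift f x c a : is_derive f (x + c) a -> is_derive (fun y => f (y + c)) x a.
Proof. intros Ha.
  assert (H1 : is_derive (fun y => y + c) x 1).
  { eapply der_val. apply der_plus. apply (is_derive_id x). apply der_const. apply Rplus_0_r. }
  eapply der_val. apply (is_derive_comp f (fun y => y + c) x a 1 Ha H1).
  apply Rmult_1_l. Qed.

Lemma dirichlet_k h h' a l k : 0 < l -> 0 < k -> k * l < PI ->
  (forall x, is_derive h x (h' x)) -> (forall x, continuous h' x) ->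
  h a = 0 -> h (a + l) = 0 ->
  k ^ 2 * RInt (fun x => h x ^ 2) a (a + l) <= RInt (fun x => h' x ^ 2) a (a + l).
Proof.
  intros Hl Hk Hkl Hh Hh' Ha Hal.
  set (m := a + l / 2).
  set (psi := fun x => - k * (sin (k * (x - m)) / cos (k * (x - m)))).
  assert (Hcos : forall x, a <= x <= a + l -> 0 < cos (k * (x - m))).
  { intros x Hx. apply cos_gt_0; unfold m; nra. }
  assert (Hpsi : forall x, a <= x <= a + l -> is_derive psi x (- k ^ 2 - psi x ^ 2)).
  { intros x Hx. specialize (Hcos x Hx). unfold psi. auto_derive.
    - replace (x + - m) with (x - m) by ring. lra.
    - replace (x + - m) with (x - m) by ring. field. lra. }
  set (Fp := fun x => 2 * h x * h' x * psi x + h x ^ 2 * (- k ^ 2 - psi x ^ 2)).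
  assert (HF : forall x, a <= x <= a + l -> is_derive (fun x => h x ^ 2 * psi x) x (Fp x)).
  { intros x Hx. eapply der_val. apply der_mult. apply der_sq, Hh. apply Hpsi; auto.
    unfold Fp; ring. }
  assert (ch : forall x, continuous h x) by (intros x; eapply c_der; apply Hh).
  assert (cpsi : forall x, a <= x <= a + l -> continuous psi x) by (intros x Hx; eapply c_der; apply Hpsi; auto).
  assert (cFp : forall x, a <= x <= a + l -> continuous Fp x).
  { intros x Hx. unfold Fp. apply c_plus. apply c_mult. apply c_mult. apply c_mult.
    apply c_const. apply ch. apply Hh'. apply cpsi; auto.
    apply c_mult. eapply c_ext. 2: apply (c_mult h (fun y => h y * 1)). intros; simpl; ring.
    apply ch. apply c_mult. apply ch. apply c_const.
    apply c_minus. apply c_const. eapply c_ext. 2: apply (c_mult psi (fun y => psi y * 1)). intros; simpl; ring.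
    apply cpsi; auto. apply c_mult. apply cpsi; auto. apply c_const. }
  assert (csq : forall f x, continuous f x -> continuous (fun y => f y ^ 2) x).
  { intros f x Hf. eapply c_ext. 2: apply (c_mult f (fun y => f y * 1)). intros; simpl; ring.
    auto. apply c_mult; auto. apply c_const. }
  assert (HRF : RInt Fp a (a + l) = 0).
  { rewrite (is_RInt_unique Fp a (a + l) (minus ((fun x => h x ^ 2 * psi x) (a + l)) ((fun x => h x ^ 2 * psi x) a))).
    - cbv beta. rewrite Ha, Hal. unfold minus, plus, opp; simpl. ring.
    - apply (@is_RInt_derive R_CompleteNormedModule (fun x => h x ^ 2 * psi x) Fp).
      + intros x Hx. rewrite Rmin_left, Rmax_right in Hx by lra. apply HF; auto.
      + intros x Hx. rewrite Rmin_left, Rmax_right in Hx by lra. apply cFp; auto. }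
  assert (e1 : ex_RInt (fun x => h' x ^ 2) a (a + l)) by (apply exRI_I; [lra|]; intros; apply csq; auto).
  assert (e2 : ex_RInt (fun x => h x ^ 2) a (a + l)) by (apply exRI_I; [lra|]; intros; apply csq; auto).
  assert (e3 : ex_RInt Fp a (a + l)) by (apply exRI_I; [lra|]; intros; apply cFp; auto).
  assert (Hge : 0 <= RInt (fun x => (h' x - h x * psi x) ^ 2) a (a + l)).
  { apply RInt_ge_0. lra. apply exRI_I. lra. intros x Hx. apply csq. apply c_minus. auto.
    apply c_mult; auto. intros x _. apply pow2_ge_0. }
  assert (Heq : RInt (fun x => (h' x - h x * psi x) ^ 2) a (a + l) =
     RInt (fun x => h' x ^ 2) a (a + l) - RInt Fp a (a + l) - k ^ 2 * RInt (fun x => h x ^ 2) a (a + l)).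
  { rewrite (RInt_ext _ (fun x => minus (minus (h' x ^ 2) (Fp x)) (scal (k ^ 2) (h x ^ 2)))).
    2: { intros x _. change ((h' x - h x * psi x) ^ 2 = (h' x ^ 2 - Fp x) - k ^ 2 * h x ^ 2). unfold Fp. ring. }
    rewrite (@RInt_minus R_CompleteNormedModule). rewrite (@RInt_minus R_CompleteNormedModule).
    rewrite (@RInt_scal R_CompleteNormedModule). reflexivity. auto. auto. auto.
    apply (@ex_RInt_minus R_NormedModule); auto.
    apply (@ex_RInt_scal R_NormedModule); auto. }
  lra.
Qed.

Lemma lim_aux (X Y P : R) : 0 <= Y -> 0 < P -> 0 <= X ->
  (forall c, 0 < c < 1 -> c ^ 2 * P * Y <= X) -> P * Y <= X.
Proof.
  intros HY HP HX H.
  destruct (Rle_or_lt (P * Y) X) as [H'|H']; auto. exfalso.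
  assert (HY' : 0 < Y) by nra.
  set (r := X / (P * Y)).
  assert (HrX : X = r * (P * Y)) by (unfold r; field; nra).
  assert (Hr1 : r < 1) by nra.
  assert (Hr0 : 0 <= r) by (unfold r; apply Rle_mult_inv_pos; nra).
  specialize (H ((1 + r) / 2) ltac:(lra)).
  assert (((1 + r) / 2) ^ 2 > r) by nra.
  nra.
Qed.

Lemma dirichlet h h' a l : 0 < l ->
  (forall x, is_derive h x (h' x)) -> (forall x, continuous h' x) ->
  h a = 0 -> h (a + l) = 0 ->
  (PI / l) ^ 2 * RInt (fun x => h x ^ 2) a (a + l) <= RInt (fun x => h' x ^ 2) a (a + l).
Proof.
  intros Hl Hh Hh' Ha Hal.
  assert (HP : 0 < PI / l) by (apply Rdiv_lt_0_compat; [apply PI_RGT_0|lra]).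
  apply lim_aux.
  - apply RInt_ge_0. lra. apply exRI_I. lra. intros x _.
    eapply c_ext. 2: apply (c_mult h (fun y => h y * 1)). intros; simpl; ring.
    eapply c_der; apply Hh. apply c_mult. eapply c_der; apply Hh. apply c_const.
    intros; apply pow2_ge_0.
  - nra.
  - apply RInt_ge_0. lra. apply exRI_I. lra. intros x _.
    eapply c_ext. 2: apply (c_mult h' (fun y => h' y * 1)). intros; simpl; ring.
    apply Hh'. apply c_mult. apply Hh'. apply c_const. intros; apply pow2_ge_0.
  - intros c Hc.
    assert (Hkl : c * (PI / l) * l < PI).
    { replace (c * (PI / l) * l) with (c * PI) by (field; lra). assert (PI > 0) by apply PI_RGT_0. nra. }
    assert (Hk := dirichlet_k h h' a l (c * (PI / l)) Hl ltac:(nra) Hkl Hh Hh' Ha Hal).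
    replace ((c * (PI / l)) ^ 2) with (c ^ 2 * (PI / l) ^ 2) in Hk by ring. exact Hk.
Qed.
Ltac req := match goal with |- ?a = ?b => change (@eq R a b) end.

Lemma to_cpt f x : continuous f x -> continuity_pt f x.
Proof. intros H. apply continuity_pt_filterlim. exact H. Qed.

Lemma der_RInt g a x : Cont g -> is_derive (fun y => RInt g a y) x (g x).
Proof. intros Hg. apply (@is_derive_RInt R_NormedModule g (fun y => RInt g a y) a x).
  - apply filter_forall. intros y. apply (@RInt_correct R_CompleteNormedModule). apply exRI; auto.
  - apply Hg. Qed.

Lemma per_double G T : Cont G -> (forall x, G (x + T) = G x) ->
  RInt G 0 (2 * T) = 2 * RInt G 0 T.
Proof. intros HG HP. rewrite <- (RI_chasles G 0 T (2 * T)) by auto.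
  replace (2 * T) with (T + T) by ring. rewrite (RI_periodic G T T) by auto. req; ring. Qed.

Lemma per_bound h h' T a : 0 < T ->
  (forall x, is_derive h x (h' x)) -> Cont h' ->
  h a = 0 -> h (a + T) = 0 ->
  (forall x, h (x + T) ^ 2 = h x ^ 2) -> (forall x, h' (x + T) ^ 2 = h' x ^ 2) ->
  (PI / T) ^ 2 * RInt (fun x => h x ^ 2) 0 (2 * T) <= RInt (fun x => h' x ^ 2) 0 (2 * T).
Proof.
  intros HT Hh Hh' Ha HaT P1 P2.
  assert (ch : Cont h) by (eapply der_cont; eauto).
  rewrite !per_double; auto using cont_sq.
  rewrite <- (RI_periodic (fun x => h x ^ 2) T a) by auto using cont_sq.
  rewrite <- (RI_periodic (fun x => h' x ^ 2) T a) by auto using cont_sq.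
  assert (H := dirichlet h h' a T HT Hh Hh' Ha HaT). lra.
Qed.

Lemma sq_split G L : 0 < L -> Cont G -> (forall x, G (x + L) = G x) ->
  RInt (fun x => (/ 2 * (G x + G (x + L / 2))) ^ 2 + (/ 2 * (G x - G (x + L / 2))) ^ 2) 0 L
  = RInt (fun x => G x ^ 2) 0 L.
Proof.
  intros HL HG HP.
  rewrite (RI_ext _ (fun x => / 2 * (G x ^ 2) + / 2 * (G (x + L / 2) ^ 2))) by (intros; field).
  rewrite RI_plus, !RI_scal; auto using cont_scal, cont_sq, cont_shift.
  rewrite (RI_shift (fun x => G x ^ 2)) by auto using cont_sq.
  replace (L + L / 2) with (L / 2 + L) by ring. replace (0 + L / 2) with (L / 2) by ring.
  rewrite RI_periodic; auto using cont_sq. req; field.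
  intros; rewrite HP; auto.
Qed.

Lemma wirtinger f f' L : 0 < L ->
  (forall x, is_derive f x (f' x)) -> Cont f' ->
  (forall x, f (x + L) = f x) -> RInt f 0 L = 0 ->
  (2 * PI / L) ^ 2 * RInt (fun x => f x ^ 2) 0 L <= RInt (fun x => f' x ^ 2) 0 L.
Proof.
  intros HL Hf Hf' HP H0.
  assert (cf : Cont f) by (eapply der_cont; eauto).
  assert (HP' : forall x, f' (x + L) = f' x).
  { intros x. assert (D : is_derive f x (f' (x + L))).
    { eapply is_derive_ext. 2: apply der_shift, Hf. intros t; apply HP. }
    rewrite <- (is_derive_unique f x (f' x)) by auto.
    rewrite <- (is_derive_unique f x (f' (x + L))) by auto. reflexivity. }
  set (T := L / 2).
  assert (HT : 0 < T) by (unfold T; lra).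
  assert (E2 : forall x, x + T + T = x + L) by (intros; unfold T; field).
  set (p := fun x => / 2 * (f x + f (x + T))).
  set (p' := fun x => / 2 * (f' x + f' (x + T))).
  set (q := fun x => / 2 * (f x - f (x + T))).
  set (q' := fun x => / 2 * (f' x - f' (x + T))).
  assert (Dp : forall x, is_derive p x (p' x)).
  { intros x. apply der_scal, der_plus. apply Hf. apply der_shift, Hf. }
  assert (Dq : forall x, is_derive q x (q' x)).
  { intros x. apply der_scal, der_minus. apply Hf. apply der_shift, Hf. }
  assert (Cp' : Cont p') by (apply cont_scal, cont_plus; auto using cont_shift).
  assert (Cq' : Cont q') by (apply cont_scal, cont_minus; auto using cont_shift).
  assert (Cp : Cont p) by (eapply der_cont; eauto).
  assert (Cq : Cont q) by (eapply der_cont; eauto).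
  assert (Zq : exists a, q a = 0 /\ q (a + T) = 0).
  { destruct (IVT_gen q 0 T 0) as [a [_ Ha]].
    - intros x. apply to_cpt, Cq.
    - assert (q T = - q 0) by (unfold q; replace (T + T) with (0 + L) by (unfold T; field);
        rewrite HP; replace (0 + T) with T by ring; ring).
      rewrite H. destruct (Rle_or_lt (q 0) 0).
      + rewrite Rmin_left, Rmax_right; lra.
      + rewrite Rmin_right, Rmax_left; lra.
    - exists a. split; auto. unfold q in *. rewrite E2, HP. lra. }
  assert (Zp : exists a, p a = 0 /\ p (a + T) = 0).
  { destruct (MVT_gen (fun y => RInt p 0 y) 0 T p) as [c [_ Hc]].
    - intros x _. apply der_RInt; auto.
    - intros x _. apply to_cpt. eapply c_der. apply der_RInt; auto.
    - assert (RInt p 0 T = 0).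
      { unfold p. rewrite RI_scal, RI_plus, RI_shift; auto using cont_shift, cont_plus.
        replace (0 + T) with T by ring. rewrite RI_chasles; auto.
        replace (T + T) with L by (unfold T; field). rewrite H0. req; ring. }
      rewrite H, RInt_point in Hc. change (0 - 0 = p c * (T - 0)) in Hc.
      exists c. assert (p c = 0) by nra. split; auto.
      unfold p in *. rewrite E2, HP. lra. }
  destruct Zq as [aq [Hq1 Hq2]]. destruct Zp as [ap [Hp1 Hp2]].
  assert (Bq := per_bound q q' T aq HT Dq Cq' Hq1 Hq2).
  assert (Bp := per_bound p p' T ap HT Dp Cp' Hp1 Hp2).
  replace (2 * T) with L in Bq, Bp by (unfold T; field).
  assert (Sf := sq_split f L HL cf HP).
  assert (Sf' := sq_split f' L HL Hf' HP').
  fold T in Sf, Sf'.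
  rewrite RI_plus in Sf, Sf'.
  fold p q p' q' in Sf, Sf'.
  replace (2 * PI / L) with (PI / T) by (unfold T; field; lra).
  rewrite <- Sf, <- Sf'.
  assert (Bq' : (PI / T) ^ 2 * RInt (fun x => q x ^ 2) 0 L <= RInt (fun x => q' x ^ 2) 0 L).
  { apply Bq; intros x; unfold q, q'; rewrite E2, ?HP, ?HP'; ring. }
  assert (Bp' : (PI / T) ^ 2 * RInt (fun x => p x ^ 2) 0 L <= RInt (fun x => p' x ^ 2) 0 L).
  { apply Bp; intros x; unfold p, p'; rewrite E2, ?HP, ?HP'; ring. }
  unfold p, q, p', q' in Bq', Bp'. lra.
  all: first [apply (cont_sq p); auto | apply (cont_sq q); auto | apply (cont_sq p'); auto | apply (cont_sq q'); auto].
Qed.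
Lemma rsum_ext d (F G : nat -> R) : (forall k, (k < d)%nat -> F k = G k) -> rsum d F = rsum d G.
Proof. induction d; intros H; simpl; auto. rewrite IHd by (intros; apply H; lia). rewrite H by lia. auto. Qed.
Lemma rsum_plus d (F G : nat -> R) : rsum d (fun k => F k + G k) = rsum d F + rsum d G.
Proof. induction d; simpl. ring. rewrite IHd. ring. Qed.
Lemma rsum_scal d c F : rsum d (fun k => c * F k) = c * rsum d F.
Proof. induction d; simpl. ring. rewrite IHd. ring. Qed.
Lemma rsum_add a b F : rsum (a + b) F = rsum a F + rsum b (fun k => F (a + k)%nat).
Proof. induction b; simpl. rewrite Nat.add_0_r. ring. rewrite Nat.add_succ_r. simpl. rewrite IHb. ring. Qed.
Lemma rsum_le d (F G : nat -> R) : (forall k, (k < d)%nat -> F k <= G k) -> rsum d F <= rsum d G.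
Proof. induction d; intros H; simpl. lra. apply Rplus_le_compat. apply IHd; intros; apply H; lia. apply H; lia. Qed.

Lemma rsum_tensor_aux N m (F G : nat -> R) :
  rsum (N * S m) (fun k => F (k / S m)%nat * G (k mod S m)%nat) = rsum N F * rsum (S m) G.
Proof.
  induction N. simpl. ring.
  replace (S N * S m)%nat with (N * S m + S m)%nat by lia.
  rewrite rsum_add, IHN. simpl (rsum (S N) F).
  assert (E : rsum (S m) (fun k => F ((N * S m + k) / S m)%nat * G ((N * S m + k) mod S m)%nat)
            = rsum (S m) (fun k => F N * G k)).
  { apply rsum_ext. intros k Hk. f_equal.
    + f_equal. rewrite Nat.add_comm, Nat.div_add by lia. rewrite Nat.div_small by lia. lia.
    + f_equal. rewrite Nat.add_comm, Nat.Div0.mod_add. apply Nat.mod_small; lia. }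
  rewrite E, rsum_scal. change (rsum (S N) F) with (rsum N F + F N). ring.
Qed.

Lemma dot_tensor n m (x x' y y' : nat -> R) :
  dot (S n * S m) (tensor m x y) (tensor m x' y') = dot (S n) x x' * dot (S m) y y'.
Proof.
  unfold dot, tensor. rewrite <- rsum_tensor_aux. apply rsum_ext. intros; ring.
Qed.

Lemma idx_bound n m k : (k < S n * S m)%nat -> (k / S m <= n)%nat /\ (k mod S m <= m)%nat.
Proof. intros H. split.
  - assert (k / S m < S n)%nat. { apply Nat.Div0.div_lt_upper_bound. lia. } lia.
  - assert (k mod S m < S m)%nat by (apply Nat.mod_upper_bound; lia). lia. Qed.

Lemma rsum_der N F F' x : (forall k, (k < N)%nat -> is_derive (F k) x (F' k)) ->
  is_derive (fun y => rsum N (fun k => F k y)) x (rsum N F').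
Proof. induction N; intros H; simpl.
  - apply der_const.
  - apply der_plus. apply IHN; intros; apply H; lia. apply H; lia. Qed.

Lemma rsum_cont N F : (forall k, (k < N)%nat -> Cont (F k)) -> Cont (fun y => rsum N (fun k => F k y)).
Proof. induction N; intros H; simpl.
  - apply cont_const.
  - apply cont_plus. apply IHN; intros; apply H; lia. apply H; lia. Qed.

Lemma rsum_RInt N F a b : (forall k, (k < N)%nat -> Cont (F k)) ->
  RInt (fun y => rsum N (fun k => F k y)) a b = rsum N (fun k => RInt (F k) a b).
Proof. induction N; intros H; simpl.
  - rewrite RI_const. ring.
  - rewrite RI_plus. rewrite IHN. auto. intros; apply H; lia.
    apply rsum_cont; intros; apply H; lia. apply H; lia. Qed.

Lemma smooth_facts f : smooth f ->
  (forall x, is_derive f x (Derive f x)) /\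
  (forall x, is_derive (Derive f) x (Derive (Derive f) x)) /\
  Cont (Derive (Derive f)).
Proof.
  intros [D [H0 H1]].
  assert (d0 : forall x, is_derive f x (D 1%nat x)).
  { intros x. eapply is_derive_ext. intros t; apply H0. apply is_derive_Reals, H1. }
  assert (e1 : forall x, Derive f x = D 1%nat x) by (intros; apply is_derive_unique, d0).
  assert (d1 : forall x, is_derive (Derive f) x (D 2%nat x)).
  { intros x. eapply is_derive_ext. intros t; symmetry; apply e1. apply is_derive_Reals, H1. }
  assert (e2 : forall x, Derive (Derive f) x = D 2%nat x) by (intros; apply is_derive_unique, d1).
  split; [|split].
  - intros x; rewrite e1; auto.
  - intros x; rewrite e2; auto.
  - apply (cont_ext (D 2%nat)). intros; symmetry; auto.
    apply (der_cont _ (D 3%nat)). intros x; apply is_derive_Reals, H1.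
Qed.

Definition d1 (g : nat -> R -> R) (i : nat) (s : R) := Derive (g i) s.
Definition d2 (g : nat -> R -> R) (i : nat) (s : R) := Derive (Derive (g i)) s.

Lemma deriv_zero_const (F : R -> R) c x l : (forall y, F y = c) -> is_derive F x l -> l = 0.
Proof. intros HF HD. rewrite <- (is_derive_unique F x l HD).
  apply is_derive_unique. eapply is_derive_ext. intros t; symmetry; apply HF. apply der_const. Qed.

Lemma curve_facts n L (g : nat -> R -> R) : closed_arclength_curve n L g ->
  (forall i s, (i <= n)%nat -> is_derive (g i) s (d1 g i s)) /\
  (forall i s, (i <= n)%nat -> is_derive (d1 g i) s (d2 g i s)) /\
  (forall i, (i <= n)%nat -> Cont (d2 g i)) /\
  (forall s, rsum (S n) (fun i => g i s ^ 2) = 1) /\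
  (forall s, rsum (S n) (fun i => d1 g i s ^ 2) = 1) /\
  (forall s, rsum (S n) (fun i => g i s * d1 g i s) = 0) /\
  (forall s, rsum (S n) (fun i => d1 g i s * d2 g i s) = 0) /\
  (forall s, rsum (S n) (fun i => g i s * d2 g i s) = -1).
Proof.
  intros (HL & Hs & Hsph & Hv & Hper & Hmin).
  assert (F : forall i, (i <= n)%nat -> _) by (intros i Hi; exact (smooth_facts _ (Hs i Hi))).
  assert (D1 : forall i s, (i <= n)%nat -> is_derive (g i) s (d1 g i s)) by (intros i s Hi; apply (F i Hi)).
  assert (D2 : forall i s, (i <= n)%nat -> is_derive (d1 g i) s (d2 g i s)) by (intros i s Hi; apply (F i Hi)).
  assert (C2 : forall i, (i <= n)%nat -> Cont (d2 g i)) by (intros i Hi; apply (F i Hi)).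
  assert (S1 : forall s, rsum (S n) (fun i => d1 g i s ^ 2) = 1).
  { intros s. destruct (Hv s) as [v [Hv1 Hv2]]. rewrite <- Hv2. apply rsum_ext.
    intros k Hk. unfold d1. rewrite (is_derive_unique (g k) s (v k)); auto.
    apply is_derive_Reals, Hv1. lia. }
  assert (S01 : forall s, rsum (S n) (fun i => g i s * d1 g i s) = 0).
  { intros s. assert (H := rsum_der (S n) (fun i y => g i y ^ 2) (fun i => 2 * g i s * d1 g i s) s).
    eapply deriv_zero_const in H. 2: exact Hsph.
    rewrite (rsum_ext _ _ (fun i => 2 * (g i s * d1 g i s))) in H by (intros; ring).
    rewrite rsum_scal in H. lra.
    intros k Hk. apply der_sq, D1; lia. }
  assert (S12 : forall s, rsum (S n) (fun i => d1 g i s * d2 g i s) = 0).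
  { intros s. assert (H := rsum_der (S n) (fun i y => d1 g i y ^ 2) (fun i => 2 * d1 g i s * d2 g i s) s).
    eapply deriv_zero_const in H. 2: exact S1.
    rewrite (rsum_ext _ _ (fun i => 2 * (d1 g i s * d2 g i s))) in H by (intros; ring).
    rewrite rsum_scal in H. lra.
    intros k Hk. apply der_sq, D2; lia. }
  assert (S02 : forall s, rsum (S n) (fun i => g i s * d2 g i s) = -1).
  { intros s. assert (H := rsum_der (S n) (fun i y => g i y * d1 g i y)
       (fun i => d1 g i s * d1 g i s + g i s * d2 g i s) s).
    eapply deriv_zero_const in H. 2: exact S01.
    rewrite rsum_plus in H. assert (E := S1 s).
    rewrite (rsum_ext _ (fun i => d1 g i s ^ 2) (fun i => d1 g i s * d1 g i s)) in E by (intros; ring). lra.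
    intros k Hk. apply der_mult. apply D1; lia. apply D2; lia. }
  split; [exact D1|split; [exact D2|split; [exact C2|split; [exact Hsph|split; [exact S1|split; [exact S01|split; [exact S12|exact S02]]]]]]].
Qed.

Lemma curve_int n L (g : nat -> R -> R) : closed_arclength_curve n L g ->
  4 * PI ^ 2 / L <= RInt (fun s => rsum (S n) (fun i => d2 g i s ^ 2)) 0 L.
Proof.
  intros Hg. assert (Hg' := Hg). destruct Hg' as (HL & _ & _ & _ & Hper & _).
  destruct (curve_facts n L g Hg) as (D1 & D2 & C2 & _ & S1 & _).
  assert (C1 : forall i, (i <= n)%nat -> Cont (d1 g i)) by (intros i Hi; eapply der_cont; intros; apply D2; auto).
  assert (C0 : forall i, (i <= n)%nat -> Cont (g i)) by (intros i Hi; eapply der_cont; intros; apply D1; auto).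
  assert (W : forall i, (i <= n)%nat ->
     (2 * PI / L) ^ 2 * RInt (fun x => d1 g i x ^ 2) 0 L <= RInt (fun x => d2 g i x ^ 2) 0 L).
  { intros i Hi. apply (wirtinger (d1 g i) (d2 g i) L HL).
    - intros x. apply D2; auto.
    - apply C2; auto.
    - intros x. assert (D : is_derive (g i) x (d1 g i (x + L))).
      { eapply is_derive_ext. 2: apply der_shift, D1; auto. intros t; apply Hper; auto. }
      unfold d1 at 2. rewrite (is_derive_unique _ _ _ D). reflexivity.
    - rewrite (is_RInt_unique (d1 g i) 0 L (minus (g i L) (g i 0))).
      + unfold minus, plus, opp; simpl. rewrite <- (Rplus_0_l L) at 1. rewrite Hper by auto. ring.
      + apply (@is_RInt_derive R_CompleteNormedModule (g i) (d1 g i)).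
        intros; apply D1; auto. intros; apply C1; auto. }
  rewrite rsum_RInt by (intros k Hk; apply cont_sq, C2; lia).
  apply Rle_trans with (rsum (S n) (fun i => (2 * PI / L) ^ 2 * RInt (fun x => d1 g i x ^ 2) 0 L)).
  - rewrite rsum_scal. rewrite <- (rsum_RInt (S n) (fun i x => d1 g i x ^ 2)) by (intros k Hk; apply cont_sq, C1; lia).
    rewrite (RI_ext _ (fun _ => 1)) by apply S1. rewrite RI_const. right. field. lra.
  - apply rsum_le. intros k Hk. apply W. lia.
Qed.

From Stdlib Require Import FunctionalExtensionality.

Lemma dot_ext d (u u' v v' : nat -> R) : (forall k, (k < d)%nat -> u k = u' k) ->
  (forall k, (k < d)%nat -> v k = v' k) -> dot d u v = dot d u' v'.
Proof. intros Hu Hv. unfold dot. apply rsum_ext. intros k Hk. rewrite Hu, Hv; auto. Qed.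

Lemma dot_comm d (u v : nat -> R) : dot d u v = dot d v u.
Proof. unfold dot. apply rsum_ext. intros; ring. Qed.

Lemma dot3 d (u1 u2 u3 : nat -> R) x1 x2 x3 :
  dot d (fun k => x1 * u1 k + x2 * u2 k + x3 * u3 k) (fun k => x1 * u1 k + x2 * u2 k + x3 * u3 k)
  = x1 ^ 2 * dot d u1 u1 + x2 ^ 2 * dot d u2 u2 + x3 ^ 2 * dot d u3 u3
    + 2 * x1 * x2 * dot d u1 u2 + 2 * x1 * x3 * dot d u1 u3 + 2 * x2 * x3 * dot d u2 u3.
Proof.
  unfold dot.
  rewrite (rsum_ext _ _ (fun k => (x1 ^ 2 * (u1 k * u1 k) + x2 ^ 2 * (u2 k * u2 k) + x3 ^ 2 * (u3 k * u3 k))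
     + (2 * x1 * x2 * (u1 k * u2 k) + 2 * x1 * x3 * (u1 k * u3 k) + 2 * x2 * x3 * (u2 k * u3 k))))
    by (intros; ring).
  rewrite !rsum_plus, !rsum_scal. ring.
Qed.

Lemma density_calc d (p a b A B C : nat -> R) (al be : R) :
  dot d a a = 1 -> dot d a b = 0 -> dot d b b = 1 ->
  dot d A a = 0 -> dot d A b = 0 -> dot d A p = -1 ->
  dot d B a = 0 -> dot d B b = 0 -> dot d B p = 0 ->
  dot d C a = 0 -> dot d C b = 0 -> dot d C p = -1 ->
  dot d A A = al -> dot d C C = be -> dot d p p = 1 -> dot d A C = 1 -> dot d B B = 1 ->
  willmore_density d p a b A B C = 1 + (al + be - 2) / 4.
Proof.
  intros Haa Hab Hbb HAa HAb HAp HBa HBb HBp HCa HCb HCp HAA HCC Hpp HAC HBB.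
  assert (EE : gE d a = 1) by exact Haa.
  assert (EF : gF d a b = 0) by exact Hab.
  assert (EG : gG d b = 1) by exact Hbb.
  assert (ED : gdet d a b = 1) by (unfold gdet; rewrite EE, EF, EG; ring).
  assert (enA : enormal d a b A = A).
  { extensionality k. unfold enormal, tproj, vsub, vadd, vscal. rewrite EE, EF, EG, ED, HAa, HAb. field. }
  assert (enB : enormal d a b B = B).
  { extensionality k. unfold enormal, tproj, vsub, vadd, vscal. rewrite EE, EF, EG, ED, HBa, HBb. field. }
  assert (enC : enormal d a b C = C).
  { extensionality k. unfold enormal, tproj, vsub, vadd, vscal. rewrite EE, EF, EG, ED, HCa, HCb. field. }
  assert (snA : snormal d p a b A = fun k => A k + p k).
  { unfold snormal. rewrite enA. extensionality k. unfold vsub, vscal. rewrite HAp. ring. }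
  assert (snB : snormal d p a b B = B).
  { unfold snormal. rewrite enB. extensionality k. unfold vsub, vscal. rewrite HBp. ring. }
  assert (snC : snormal d p a b C = fun k => C k + p k).
  { unfold snormal. rewrite enC. extensionality k. unfold vsub, vscal. rewrite HCp. ring. }
  assert (HM : mean_curv d p a b A B C = fun k => / 2 * A k + / 2 * C k + 1 * p k).
  { unfold mean_curv. rewrite snA, snB, snC, EE, EF, EG, ED. extensionality k.
    unfold vscal, vadd, vsub. field. }
  unfold willmore_density, gauss_curv. rewrite HM, dot3, enA, enB, enC, ED.
  rewrite HAA, HCC, Hpp, HAC, HAp, HCp, HBB, sqrt_1. field.
Qed.

Definition V0 (g : nat -> R -> R) s : nat -> R := fun i => g i s.
Definition V1 (g : nat -> R -> R) s : nat -> R := fun i => d1 g i s.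
Definition V2 (g : nat -> R -> R) s : nat -> R := fun i => d2 g i s.

Lemma vfacts n L (g : nat -> R -> R) : closed_arclength_curve n L g -> forall s,
  dot (S n) (V0 g s) (V0 g s) = 1 /\ dot (S n) (V1 g s) (V1 g s) = 1 /\
  dot (S n) (V0 g s) (V1 g s) = 0 /\ dot (S n) (V1 g s) (V0 g s) = 0 /\
  dot (S n) (V1 g s) (V2 g s) = 0 /\ dot (S n) (V2 g s) (V1 g s) = 0 /\
  dot (S n) (V0 g s) (V2 g s) = -1 /\ dot (S n) (V2 g s) (V0 g s) = -1.
Proof.
  intros Hg s. destruct (curve_facts n L g Hg) as (_ & _ & _ & S0 & S1 & S01 & S12 & S02).
  assert (E0 : dot (S n) (V0 g s) (V0 g s) = 1).
  { rewrite <- (S0 s). unfold dot, V0. apply rsum_ext; intros; ring. }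
  assert (E1 : dot (S n) (V1 g s) (V1 g s) = 1).
  { rewrite <- (S1 s). unfold dot, V1. apply rsum_ext; intros; ring. }
  assert (E01 : dot (S n) (V0 g s) (V1 g s) = 0) by exact (S01 s).
  assert (E12 : dot (S n) (V1 g s) (V2 g s) = 0) by exact (S12 s).
  assert (E02 : dot (S n) (V0 g s) (V2 g s) = -1) by exact (S02 s).
  repeat split; auto; rewrite dot_comm; auto.
Qed.

Ltac rr := cbv beta; match goal with |- ?a = ?b => change (@eq R a b) end; ring.

Lemma der_uniq f x l l' : is_derive f x l -> is_derive f x l' -> l = l'.
Proof. intros H H'. rewrite <- (is_derive_unique f x l H). apply is_derive_unique; auto. Qed.

Lemma Yvals n m L Lh (g gh : nat -> R -> R) Ys Yt Yss Yst Ytt :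
  closed_arclength_curve n L g -> closed_arclength_curve m Lh gh ->
  surface_partials (S n * S m) (torus_tensor m g gh) Ys Yt Yss Yst Ytt ->
  forall k, (k < S n * S m)%nat -> forall s t,
    Ys s t k = tensor m (V1 g s) (V0 gh t) k /\
    Yt s t k = tensor m (V0 g s) (V1 gh t) k /\
    Yss s t k = tensor m (V2 g s) (V0 gh t) k /\
    Yst s t k = tensor m (V1 g s) (V1 gh t) k /\
    Ytt s t k = tensor m (V0 g s) (V2 gh t) k.
Proof.
  intros Hg Hgh HY k Hk.
  destruct (idx_bound n m k Hk) as [Hi Hj].
  destruct (curve_facts n L g Hg) as (D1 & D2 & _).
  destruct (curve_facts m Lh gh Hgh) as (E1 & E2 & _).
  unfold tensor, V0, V1, V2.
  set (i := (k / S m)%nat) in *. set (j := (k mod S m)%nat) in *.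
  assert (ys : forall s t, Ys s t k = d1 g i s * gh j t).
  { intros s t. destruct (HY s t k Hk) as (h1 & _).
    apply is_derive_Reals in h1. eapply der_uniq. exact h1.
    unfold torus_tensor, tensor. fold i j.
    eapply der_val. apply der_mult. apply D1; auto. apply der_const. rr. }
  assert (yt : forall s t, Yt s t k = g i s * d1 gh j t).
  { intros s t. destruct (HY s t k Hk) as (_ & h1 & _).
    apply is_derive_Reals in h1. eapply der_uniq. exact h1.
    unfold torus_tensor, tensor. fold i j.
    eapply der_val. apply der_mult. apply der_const. apply E1; auto. rr. }
  intros s t. split; [|split; [|split; [|split]]]; auto.
  - destruct (HY s t k Hk) as (_ & _ & h1 & _).
    apply is_derive_Reals in h1. eapply der_uniq. exact h1.
    eapply is_derive_ext. intros u; symmetry; apply ys.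
    eapply der_val. apply der_mult. apply D2; auto. apply der_const. rr.
  - destruct (HY s t k Hk) as (_ & _ & _ & h1 & _).
    apply is_derive_Reals in h1. eapply der_uniq. exact h1.
    eapply is_derive_ext. intros u; symmetry; apply ys.
    eapply der_val. apply der_mult. apply der_const. apply E1; auto. rr.
  - destruct (HY s t k Hk) as (_ & _ & _ & _ & h1).
    apply is_derive_Reals in h1. eapply der_uniq. exact h1.
    eapply is_derive_ext. intros u; symmetry; apply yt.
    eapply der_val. apply der_mult. apply der_const. apply E2; auto. rr.
Qed.

Lemma integrand_val n m L Lh (g gh : nat -> R -> R) Ys Yt Yss Yst Ytt :
  closed_arclength_curve n L g -> closed_arclength_curve m Lh gh ->
  surface_partials (S n * S m) (torus_tensor m g gh) Ys Yt Yss Yst Ytt ->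
  forall s t, willmore_integrand (S n * S m) (torus_tensor m g gh) Ys Yt Yss Yst Ytt s t
    = 1 + (dot (S n) (V2 g s) (V2 g s) + dot (S m) (V2 gh t) (V2 gh t) - 2) / 4.
Proof.
  intros Hg Hgh HY s t.
  assert (YV := Yvals n m L Lh g gh Ys Yt Yss Yst Ytt Hg Hgh HY).
  assert (P : forall k, (k < S n * S m)%nat -> torus_tensor m g gh s t k = tensor m (V0 g s) (V0 gh t) k)
    by (intros; reflexivity).
  assert (Pa : forall k, (k < S n * S m)%nat -> Ys s t k = tensor m (V1 g s) (V0 gh t) k)
    by (intros k Hk; apply (YV k Hk s t)).
  assert (Pb : forall k, (k < S n * S m)%nat -> Yt s t k = tensor m (V0 g s) (V1 gh t) k)
    by (intros k Hk; apply (YV k Hk s t)).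
  assert (PA : forall k, (k < S n * S m)%nat -> Yss s t k = tensor m (V2 g s) (V0 gh t) k)
    by (intros k Hk; apply (YV k Hk s t)).
  assert (PB : forall k, (k < S n * S m)%nat -> Yst s t k = tensor m (V1 g s) (V1 gh t) k)
    by (intros k Hk; apply (YV k Hk s t)).
  assert (PC : forall k, (k < S n * S m)%nat -> Ytt s t k = tensor m (V0 g s) (V2 gh t) k)
    by (intros k Hk; apply (YV k Hk s t)).
  destruct (vfacts n L g Hg s) as (f00 & f11 & f01 & f10 & f12 & f21 & f02 & f20).
  destruct (vfacts m Lh gh Hgh t) as (h00 & h11 & h01 & h10 & h12 & h21 & h02 & h20).
  unfold willmore_integrand.
  rewrite (density_calc _ _ _ _ _ _ _ (dot (S n) (V2 g s) (V2 g s)) (dot (S m) (V2 gh t) (V2 gh t))).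
  - reflexivity.
  all: first [ rewrite (dot_ext _ _ _ _ _ P P) | rewrite (dot_ext _ _ _ _ _ P Pa) | rewrite (dot_ext _ _ _ _ _ P Pb) | rewrite (dot_ext _ _ _ _ _ P PA) | rewrite (dot_ext _ _ _ _ _ P PB) | rewrite (dot_ext _ _ _ _ _ P PC) | rewrite (dot_ext _ _ _ _ _ Pa P) | rewrite (dot_ext _ _ _ _ _ Pa Pa) | rewrite (dot_ext _ _ _ _ _ Pa Pb) | rewrite (dot_ext _ _ _ _ _ Pa PA) | rewrite (dot_ext _ _ _ _ _ Pa PB) | rewrite (dot_ext _ _ _ _ _ Pa PC) | rewrite (dot_ext _ _ _ _ _ Pb P) | rewrite (dot_ext _ _ _ _ _ Pb Pa) | rewrite (dot_ext _ _ _ _ _ Pb Pb) | rewrite (dot_ext _ _ _ _ _ Pb PA) | rewrite (dot_ext _ _ _ _ _ Pb PB) | rewrite (dot_ext _ _ _ _ _ Pb PC) | rewrite (dot_ext _ _ _ _ _ PA P) | rewrite (dot_ext _ _ _ _ _ PA Pa) | rewrite (dot_ext _ _ _ _ _ PA Pb) | rewrite (dot_ext _ _ _ _ _ PA PA) | rewrite (dot_ext _ _ _ _ _ PA PB) | rewrite (dot_ext _ _ _ _ _ PA PC) | rewrite (dot_ext _ _ _ _ _ PB P) | rewrite (dot_ext _ _ _ _ _ PB Pa) | rewrite (dot_ext _ _ _ _ _ PB Pb) | rewrite (dot_ext _ _ _ _ _ PB PA) | rewrite (dot_ext _ _ _ _ _ PB PB) | rewrite (dot_ext _ _ _ _ _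 PB PC) | rewrite (dot_ext _ _ _ _ _ PC P) | rewrite (dot_ext _ _ _ _ _ PC Pa) | rewrite (dot_ext _ _ _ _ _ PC Pb) | rewrite (dot_ext _ _ _ _ _ PC PA) | rewrite (dot_ext _ _ _ _ _ PC PB) | rewrite (dot_ext _ _ _ _ _ PC PC) ]; rewrite dot_tensor.
  all: rewrite ?f00, ?f11, ?f01, ?f10, ?f12, ?f21, ?f02, ?f20,
               ?h00, ?h11, ?h01, ?h10, ?h12, ?h21, ?h02, ?h20; ring.
Qed.

Lemma V2sq n (g : nat -> R -> R) s : dot (S n) (V2 g s) (V2 g s) = rsum (S n) (fun i => d2 g i s ^ 2).
Proof. unfold dot, V2. apply rsum_ext; intros; ring. Qed.

Lemma final_ineq L Lh Ig Ih : 0 < L -> 0 < Lh -> 4 * PI ^ 2 / L <= Ig -> 4 * PI ^ 2 / Lh <= Ih ->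
  L * (Lh / 2 + Ih / 4) + Lh / 4 * Ig > 2 * PI ^ 2.
Proof.
  intros HL HLh HI HIh.
  assert (A1 : Lh / 4 * Ig >= Lh * PI ^ 2 / L).
  { apply Rle_ge. apply Rle_trans with (Lh / 4 * (4 * PI ^ 2 / L)).
    right; field; lra. apply Rmult_le_compat_l; lra. }
  assert (A2 : L * (Ih / 4) >= L * PI ^ 2 / Lh).
  { apply Rle_ge. apply Rle_trans with (L * (4 * PI ^ 2 / Lh / 4)).
    right; field; lra. apply Rmult_le_compat_l; lra. }
  assert (A3 : Lh * PI ^ 2 / L + L * PI ^ 2 / Lh - 2 * PI ^ 2 = PI ^ 2 * (L - Lh) ^ 2 / (L * Lh)).
  { field. lra. }
  assert (A4 : 0 <= PI ^ 2 * (L - Lh) ^ 2 / (L * Lh)).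
  { apply Rmult_le_pos. apply Rmult_le_pos; apply pow2_ge_0. apply Rlt_le, Rinv_0_lt_compat; nra. }
  nra.
Qed.

Theorem proposition3p7 (n m : nat) (L Lh : R) (g gh : nat -> R -> R)
  (Hg : closed_arclength_curve n L g) (Hgh : closed_arclength_curve m Lh gh)
  (Ys Yt Yss Yst Ytt : R -> R -> nat -> R)
  (HY : surface_partials (S n * S m) (torus_tensor m g gh) Ys Yt Yss Yst Ytt)
  (pr : forall s, Riemann_integrable
          (fun t => willmore_integrand (S n * S m) (torus_tensor m g gh)
                      Ys Yt Yss Yst Ytt s t) 0 Lh)
  (pr2 : Riemann_integrable (fun s => RiemannInt (pr s)) 0 L) :
  RiemannInt pr2 > 2 * PI ^ 2.
Proof.
  assert (HL : 0 < L) by apply Hg. assert (HLh : 0 < Lh) by apply Hgh.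
  set (Qg := fun s => rsum (S n) (fun i => d2 g i s ^ 2)).
  set (Qh := fun t => rsum (S m) (fun i => d2 gh i t ^ 2)).
  destruct (curve_facts n L g Hg) as (_ & _ & Cg & _).
  destruct (curve_facts m Lh gh Hgh) as (_ & _ & Ch & _).
  assert (CQg : Cont Qg) by (apply rsum_cont; intros k Hk; apply cont_sq, Cg; lia).
  assert (CQh : Cont Qh) by (apply rsum_cont; intros k Hk; apply cont_sq, Ch; lia).
  set (Ih := RInt Qh 0 Lh). set (Ig := RInt Qg 0 L).
  assert (Inner : forall s, RiemannInt (pr s) = Lh / 2 + Ih / 4 + Lh / 4 * Qg s).
  { intros s. rewrite <- RInt_Reals.
    rewrite (RI_ext _ (fun t => (1 + (Qg s - 2) / 4) + / 4 * Qh t)).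
    - rewrite RI_plus, RI_const, RI_scal; auto using cont_const, cont_scal. unfold Ih.
      replace (Lh - 0) with Lh by ring. field.
    - intros t. rewrite (integrand_val n m L Lh g gh Ys Yt Yss Yst Ytt Hg Hgh HY s t).
      rewrite !V2sq. fold (Qg s) (Qh t). field. }
  rewrite <- RInt_Reals.
  rewrite (RI_ext _ (fun s => (Lh / 2 + Ih / 4) + Lh / 4 * Qg s)) by apply Inner.
  rewrite RI_plus, RI_const, RI_scal; auto using cont_const, cont_scal. fold Ig.
  replace (L - 0) with L by ring.
  apply final_ineq; auto.
  - apply (curve_int n L g Hg).
  - apply (curve_int m Lh gh Hgh).
Qed.
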